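(* Let $\lambda$ be a partition of $n$, let $l_1(\lambda)$ be the multiplicity of the part $1$ in $\lambda$, and let $\mathrm{fch}(\lambda)=\{h(1,1),h(2,1),\dots,h(l(\lambda),1)\}$ be the set of first-column hook lengths of $\lambda$, where $l(\lambda)$ is the number of parts. Let $f_\lambda$ be the degree of the irreducible character of $\mathsf{S}_n$ labelled by $\lambda$. If $q$ is a prime with $n-l_1(\lambda)\le q\le n$ and $q\nmid f_\lambda$, then $q,2q,\dots,\lfloor n/q\rfloor q\in\mathrm{fch}(\lambda)$.
   Context: $h(i,j)$ denotes the hook length at node $(i,j)$ of the Young diagram of $\lambda$ (number of nodes to the right of and below $(i,j)$, including $(i,j)$). $f_\lambda=n!/\prod_{(i,j)}h(i,j)$. *)

(* Defs.v *)
From mathcomp Require Import all_boot.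
Set Implicit Arguments. Unset Strict Implicit. Unset Printing Implicit Defensive.

(* A partition of n: a nonincreasing sequence of positive parts summing to n.
   Rows and columns are 0-indexed: row i (i < size la) has nth 0 la i nodes. *)
Definition is_partition (n : nat) (la : seq nat) : Prop :=
  [/\ sorted geq la, all (fun p => 0 < p) la & sumn la = n].

Definition col_len (la : seq nat) (j : nat) : nat := count (fun p => j < p) la.

(* hook length at node (i,j) (0-indexed): arm + leg + 1 *)
Definition hook (la : seq nat) (i j : nat) : nat :=
  (nth 0 la i - j.+1) + (col_len la j - i.+1) + 1.

(* f_lambda = n! / prod of hook lengths (hook length formula) *)
Definition flam (la : seq nat) : nat :=
  (sumn la)`! %/ \prod_(i < size la) \prod_(j < nth 0 la i) hook la i j.

Definition l1 (la : seq nat) : nat := count_mem 1 la.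

Definition fch (la : seq nat) : seq nat := [seq hook la i 0 | i <- iota 0 (size la)].

(* Main.v *)
Require Import Defs.
From mathcomp Require Import all_boot zify.
Set Implicit Arguments. Unset Strict Implicit.


Lemma dvdn_from_logn d N : 0 < d -> 0 < N ->
  (forall p, prime p -> logn p d <= logn p N) -> d %| N.
Proof.
move=> d0 N0 H; apply/(dvdn_partP _ d0) => p; rewrite mem_primes => /andP[pp _].
by rewrite p_part pfactor_dvdn // H.
Qed.

Lemma nth_gt_col (s : seq nat) j k : sorted geq s ->
  (j < nth 0 s k) = (k < count (fun p => j < p) s).
Proof.
elim: s k => [|a s IH] k /=; first by rewrite nth_nil; case: k.
move=> ps; have ss : sorted geq s by apply: path_sorted ps.
have allb : all (fun x => x <= a) s.
  have := order_path_min (fun (y x z : nat) (h1 : y <= x) (h2 : z <= y) => leq_trans h2 h1) ps.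
  by [].
case: (ltnP j a) => ja.
  case: k => [|k] //=; rewrite IH //.
have c0 : count (fun p => j < p) s = 0.
  apply/eqP; rewrite -leqn0 leqNgt -has_count; apply/hasPn => x xs.
  by rewrite -leqNgt; apply: leq_trans ja; move/allP: allb => /(_ x xs).
have jaf : (j < a) = false by rewrite ltnNge ja.
case: k => [|k] /=; first by rewrite c0.
by rewrite IH // c0.
Qed.
Lemma countB (B : seq nat) (P : pred nat) x : uniq B ->
  count (fun t => (t \in B) && P t) (iota 0 x) = count (fun b => (b < x) && P b) B.
Proof.
move=> uB.
have e1 : count (fun t => (t \in B) && P t) (iota 0 x) = count P (filter (mem B) (iota 0 x)).
  by rewrite count_filter; apply: eq_count => t /=; rewrite andbC.
have e2 : count (fun b => (b < x) && P b) B = count P (filter (fun b => b < x) B).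
  by rewrite count_filter; apply: eq_count => t /=; rewrite andbC.
rewrite e1 e2; apply/permP; apply: uniq_perm.
- by rewrite filter_uniq // iota_uniq.
- by rewrite filter_uniq.
move=> t; rewrite !mem_filter mem_iota /= add0n andbC.
done.
Qed.

Lemma count_mod_step m x : 0 < m ->
  count (fun t => t %% m == x %% m) (iota 0 (x + m)) =
  (count (fun t => t %% m == x %% m) (iota 0 x)).+1.
Proof.
move=> m0; rewrite iotaD count_cat add0n.
have -> : iota x m = map (addn x) (iota 0 m) by rewrite -iotaDl addn0.
rewrite count_map.
rewrite -addn1; congr (_ + _).
rewrite (eq_in_count (a2 := pred1 0)); last first.
  move=> u; rewrite mem_iota /= => um.
  by rewrite -[X in _ == X %% m]addn0 eqn_modDl mod0n modn_small.
by rewrite (count_uniq_mem 0 (iota_uniq 0 m)) mem_iota add0n m0.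
Qed.

Lemma count_mod m x : 0 < m ->
  count (fun t => t %% m == x %% m) (iota 0 x) = x %/ m.
Proof.
move=> m0.
suff H : forall a b, b < m -> count (fun t => t %% m == (a * m + b) %% m) (iota 0 (a * m + b)) = a.
  by rewrite {1 2}(divn_eq x m) H ?ltn_pmod.
move=> a b bm; elim: a => [|a IH].
  rewrite mul0n add0n (eq_in_count (a2 := pred0)) ?count_pred0 //.
  move=> t; rewrite mem_iota add0n /= => tb.
  by rewrite !modn_small ?(ltn_eqF tb) // (ltn_trans tb).
have -> : a.+1 * m + b = (a * m + b) + m by lia.
by rewrite modnDr count_mod_step // IH.
Qed.

Lemma sum_uniq k (w : seq nat) : uniq w -> size w = k ->
  \sum_(i < k) i <= \sum_(x <- w) x.
Proof.
elim: k w => [|k IH] w uw sw; first by rewrite big_ord0.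
have [x xw kx] : exists2 x, x \in w & k <= x.
  case: (boolP (has (fun x => k <= x) w)) => [/hasP[x xw kx] | /hasPn H].
    by exists x.
  have : size w <= k.
    rewrite -[X in _ <= X](size_iota 0 k); apply: (uniq_leq_size uw) => y yw; rewrite mem_iota add0n /=.
    by have := H y yw; rewrite -ltnNge.
  by rewrite sw ltnn.
rewrite big_ord_recr /= (perm_big _ (perm_to_rem xw)) big_cons addnC.
apply: leq_add => //; apply: IH; first exact: rem_uniq.
by rewrite size_rem // sw.
Qed.


Definition beta (la : seq nat) i := nth 0 la i + (size la - i.+1).
Definition gg (la : seq nat) j := j + (size la - col_len la j).

Section Part.
Variable la : seq nat.
Hypothesis sla : sorted geq la.
Hypothesis pla : all (fun p => 0 < p) la.

Lemma col_le j : col_len la j <= size la.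
Proof. exact: count_size. Qed.

Lemma cellE i j : (j < nth 0 la i) = (i < col_len la j).
Proof. exact: nth_gt_col. Qed.

Lemma nth_mono i k : i <= k -> nth 0 la k <= nth 0 la i.
Proof.
move=> ik; rewrite leqNgt; apply/negP => H.
have := H; rewrite cellE => /(leq_ltn_trans ik); rewrite -cellE ltnn.
done.
Qed.

Lemma hook_beta i j : j < nth 0 la i -> hook la i j = beta la i - gg la j.
Proof.
move=> ji; have := ji; rewrite cellE => ic; have := col_le j.
rewrite /hook /beta /gg; lia.
Qed.

Lemma col0 : col_len la 0 = size la.
Proof. by apply/eqP; rewrite -all_count. Qed.

Lemma hook0 i : i < size la -> hook la i 0 = beta la i.
Proof.
move=> il; have p0 : 0 < nth 0 la i by apply: (allP pla); rewrite mem_nth.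
by rewrite hook_beta // /gg col0 subnn addn0 subn0.
Qed.

Lemma fchE : fch la = map (beta la) (iota 0 (size la)).
Proof. by apply/eq_in_map => i; rewrite mem_iota => /andP[_]; rewrite add0n => /hook0. Qed.

Lemma beta_decr i k : i < k -> k < size la -> beta la k < beta la i.
Proof. move=> ik kl; have := nth_mono (ltnW ik); rewrite /beta; lia. Qed.

Lemma gg_notin j : gg la j \notin fch la.
Proof.
rewrite fchE; apply/mapP => -[k]; rewrite mem_iota add0n /= => kl.
have := col_le j; rewrite /gg /beta.
case: (ltnP k (col_len la j)) => kc.
  have := kc; rewrite -cellE; lia.
have : ~~ (j < nth 0 la k) by rewrite cellE -leqNgt.
rewrite -leqNgt; lia.
Qed.

Lemma gg_incr j j' : j < j' -> gg la j < gg la j'.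
Proof.
move=> jj; have : col_len la j' <= col_len la j.
  by apply: sub_count => p /=; apply: leq_ltn_trans; apply: ltnW.
have := col_le j; rewrite /gg; lia.
Qed.

Lemma uniq_fch : uniq (fch la).
Proof.
rewrite fchE map_inj_in_uniq ?iota_uniq // => i k.
rewrite !mem_iota !add0n /= => il kl e.
case: (ltngtP i k) => // [ik|ki]; first by have := beta_decr ik kl; rewrite e ltnn.
by have := beta_decr ki il; rewrite e ltnn.
Qed.

Lemma count_below i : i < size la ->
  count (fun b => b < beta la i) (fch la) = size la - i.+1.
Proof.
move=> il; rewrite fchE count_map.
rewrite (eq_in_count (a2 := fun k => i < k)); last first.
  move=> k; rewrite mem_iota add0n /= => kl.
  case: (ltngtP i k) => [ik|ki|->]; first by rewrite beta_decr.
    by apply/negbTE; rewrite -leqNgt ltnW // beta_decr.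
  by rewrite ltnn.
elim: (size la) => [|L IH]; first by [].
have -> : iota 0 L.+1 = iota 0 L ++ [:: L] by rewrite -addn1 iotaD.
rewrite count_cat IH /=; lia.
Qed.


Lemma count_split (T : Type) (a P : pred T) s :
  count (fun t => a t && P t) s + count (fun t => ~~ a t && P t) s = count P s.
Proof. elim: s => //= y s IH; case: (a y); case: (P y) => /=; lia. Qed.

Lemma gg_inj : injective (gg la).
Proof.
move=> j j' e; case: (ltngtP j j') => // jj; have := gg_incr jj; rewrite e ltnn //.
Qed.

Lemma row_perm i : i < size la ->
  perm_eq (map (gg la) (iota 0 (nth 0 la i)))
          (filter (fun t => t \notin fch la) (iota 0 (beta la i))).
Proof.
move=> il.
have u1 : uniq (map (gg la) (iota 0 (nth 0 la i))) by rewrite map_inj_uniq ?iota_uniq //; exact: gg_inj.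
have sub : {subset map (gg la) (iota 0 (nth 0 la i)) <=
            filter (fun t => t \notin fch la) (iota 0 (beta la i))}.
  move=> t /mapP[j]; rewrite mem_iota add0n /= => ji ->.
  rewrite mem_filter gg_notin /= mem_iota add0n /=.
  have := hook_beta ji; rewrite /hook; lia.
have sz : size (filter (fun t => t \notin fch la) (iota 0 (beta la i))) <=
          size (map (gg la) (iota 0 (nth 0 la i))).
  rewrite size_map size_iota size_filter.
  have := count_predC (fun t => t \in fch la) (iota 0 (beta la i)).
  have := countB predT (beta la i) uniq_fch.
  rewrite (eq_count (a1 := fun t => (t \in fch la) && predT t) (a2 := fun t => t \in fch la)); last by move=> t; rewrite andbT.
  rewrite (eq_count (a1 := fun b => (b < beta la i) && predT b) (a2 := fun b => b < beta la i)); last by move=> t; rewrite andbT.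
  rewrite count_below // size_iota.
  have -> : count (predC (fun t => t \in fch la)) (iota 0 (beta la i)) = count (fun t => t \notin fch la) (iota 0 (beta la i)) by [].
  rewrite /beta; lia.
have [_ e] := uniq_min_size u1 sub sz.
by apply: uniq_perm => //; rewrite filter_uniq // iota_uniq.
Qed.

Lemma row_eq m i : 0 < m -> i < size la ->
  m * count (fun j => m %| hook la i j) (iota 0 (nth 0 la i)) +
  (m * count (fun b => (b < beta la i) && (b %% m == beta la i %% m)) (fch la)
   + beta la i %% m) = beta la i.
Proof.
move=> m0 il; set x := beta la i.
have e1 : count (fun j => m %| hook la i j) (iota 0 (nth 0 la i)) =
          count (fun t => (t \notin fch la) && (t %% m == x %% m)) (iota 0 x).
  transitivity (count (fun j => m %| x - gg la j) (iota 0 (nth 0 la i))).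
    by apply: eq_in_count => j; rewrite mem_iota add0n /= => ji; rewrite hook_beta.
  have -> : count (fun j => m %| x - gg la j) (iota 0 (nth 0 la i)) =
            count (fun t => m %| x - t) (map (gg la) (iota 0 (nth 0 la i))) by rewrite count_map.
  rewrite (permP (row_perm il)) count_filter.
  apply: eq_in_count => t; rewrite mem_iota add0n /= => tx.
  by rewrite andbC eq_sym eqn_mod_dvd // ltnW.
have e2 := count_split (fun t => t \in fch la) (fun t => t %% m == x %% m) (iota 0 x).
rewrite countB ?uniq_fch // count_mod // -e1 in e2.
rewrite [RHS](divn_eq x m) -e2 mulnDl; nia.
Qed.


Lemma count_lt (T : eqType) (P Q : pred T) (s : seq T) y :
  (forall x, P x -> Q x) -> y \in s -> Q y -> ~~ P y -> count P s < count Q s.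
Proof.
move=> PQ ys Qy Py.
rewrite -(count_split P Q s).
rewrite (eq_count (a1 := fun t => P t && Q t) (a2 := P)); last first.
  by move=> t /=; case Pt: (P t) => //=; rewrite PQ.
rewrite -[X in X < _]addn0 ltn_add2l -has_count; apply/hasP; exists y => //.
by rewrite Py Qy.
Qed.

Lemma hooks_bound m : 0 < m ->
  m * \sum_(i < size la) count (fun j => m %| hook la i j) (iota 0 (nth 0 la i))
  <= sumn la.
Proof.
move=> m0.
pose r i := count (fun b => (b < beta la i) && (b %% m == beta la i %% m)) (fch la).
pose z i := m * r i + beta la i %% m.
have Hrow : \sum_(i < size la) (m * count (fun j => m %| hook la i j) (iota 0 (nth 0 la i)) + z i)
          = \sum_(i < size la) beta la i.
  by apply: eq_bigr => i _; rewrite row_eq.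
rewrite big_split /= -big_distrr /= in Hrow.
have Hb : \sum_(i < size la) beta la i = sumn la + \sum_(i < size la) (i : nat).
  rewrite big_split /=; congr (_ + _).
    by rewrite sumnE (big_nth 0) big_mkord.
  by rewrite [RHS](reindex_inj rev_ord_inj).
have uz : uniq (map z (iota 0 (size la))).
  rewrite map_inj_in_uniq ?iota_uniq // => i k.
  rewrite !mem_iota !add0n /= => il kl.
  rewrite /z => e.
  have em : beta la i %% m = beta la k %% m.
    by have := congr1 (fun u => u %% m) e; rewrite /= !(mulnC m) !modnMDl !modn_mod.
  move: e; rewrite em => /addIn /eqP; rewrite eqn_pmul2l // => /eqP er.
  wlog ik : i k il kl em er / i <= k.
    move=> W; case: (leqP i k) => [ik|ki]; first exact: W.
    by apply/esym; apply: W => //; apply: ltnW.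
  rewrite leq_eqVlt in ik; case/orP: ik => [/eqP // | ik].
  have : r k < r i.
    apply: (count_lt (y := beta la k)).
    - move=> b /andP[bk bm]; rewrite (ltn_trans bk (beta_decr ik kl)) /=.
      by rewrite em.
    - by rewrite fchE map_f // mem_iota add0n.
    - by rewrite beta_decr //= em.
    - by rewrite ltnn.
  by rewrite er ltnn.
have := sum_uniq uz (size_map _ _); rewrite size_iota => Hz.
have Hz' : \sum_(x <- map z (iota 0 (size la))) x = \sum_(i < size la) z i.
  by rewrite big_map -(big_mkord xpredT z) /index_iota subn0.
move: Hrow Hz; rewrite Hz' Hb => H1 H2.
by rewrite -(leq_add2r (\sum_(i < size la) (i:nat))) -H1 leq_add2l.
Qed.

End Part.


Lemma sum_bool_count (P : pred nat) n : \sum_(j < n) (P j : nat) = count P (iota 0 n).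
Proof.
elim: n => [|n IH]; first by rewrite big_ord0.
have -> : iota 0 n.+1 = iota 0 n ++ [:: n] by rewrite -addn1 iotaD.
rewrite big_ord_recr /= IH count_cat /=; lia.
Qed.

Lemma logn_prod p (I : Type) (r : seq I) (F : I -> nat) : (forall i, 0 < F i) ->
  logn p (\prod_(i <- r) F i) = \sum_(i <- r) logn p (F i).
Proof.
move=> Fp; elim: r => [|a r IH]; first by rewrite !big_nil logn1.
by rewrite !big_cons lognM ?IH // prodn_gt0.
Qed.

Lemma logn_count_ext p h M : prime p -> 0 < h -> h <= M ->
  logn p h = \sum_(1 <= k < M) (p ^ k %| h).
Proof.
move=> pp h0 hM; rewrite logn_count_dvd //.
have [h1|h2] := leqP h 1.
  have -> : h = 1 by lia.
  rewrite big_geq // big1_seq // => k /andP[_]; rewrite mem_index_iota => /andP[k1 _].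
  by rewrite dvdn1 -(expn0 p) eqn_exp2l ?prime_gt1 //; case: k k1.
have H1 : 1 <= h by lia.
rewrite (big_cat_nat H1 hM) /=.
rewrite [X in _ = _ + X]big1_seq ?addn0 // => k /andP[_]; rewrite mem_index_iota => /andP[hk _].
suff -> : (p ^ k %| h) = false by [].
apply/negP => /(dvdn_leq h0); rewrite leqNgt.
have := ltn_expl k (prime_gt1 pp); lia.
Qed.

Lemma logn_fact_ext p n M : prime p -> n < M ->
  logn p n`! = \sum_(1 <= k < M) n %/ p ^ k.
Proof.
move=> pp nM; rewrite logn_fact //.
rewrite (big_cat_nat (ltn0Sn n) nM) /=.
rewrite [X in _ = _ + X]big1_seq ?addn0 // => k /andP[_]; rewrite mem_index_iota => /andP[hk _].
by rewrite divn_small //; have := ltn_expl k (prime_gt1 pp); lia.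
Qed.

Lemma sumn_ge_size_count (s : seq nat) : all (fun p => 0 < p) s ->
  size s + count (fun p => 1 < p) s <= sumn s.
Proof. elim: s => //= a s IH /andP[a0 /IH]; case: (ltnP 1 a) => /=; lia. Qed.

Lemma sumn_ge_nth (s : seq nat) i : all (fun p => 0 < p) s -> i < size s ->
  size s + nth 0 s i <= (sumn s).+1.
Proof.
elim: s i => //= a s IH [|i] /andP[a0 ps] /=.
  by have := sumn_ge_size_count ps; lia.
by move=> il; have := IH i ps il; lia.
Qed.

Lemma sumn_ge_nth2 (s : seq nat) i : all (fun p => 0 < p) s -> i < size s ->
  1 < nth 0 s i ->
  size s + count (fun p => 1 < p) s + nth 0 s i <= (sumn s).+2.
Proof.
elim: s i => //= a s IH [|i] /andP[a0 ps] /=.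
  by have := sumn_ge_size_count ps; move=> H _ a1; rewrite a1 /=; lia.
by move=> il h1; have := IH i ps il h1; case: (ltnP 1 a) => /=; lia.
Qed.

Lemma count_1_split (s : seq nat) : all (fun p => 0 < p) s ->
  count_mem 1 s + count (fun p => 1 < p) s = size s.
Proof. elim: s => //= a s IH /andP[a0 /IH]; case: (ltngtP 1 a) => /=; lia. Qed.

Definition HP (la : seq nat) := \prod_(i < size la) \prod_(j < nth 0 la i) hook la i j.

Lemma hook_gt0 la i j : 0 < hook la i j.
Proof. by rewrite /hook addn1. Qed.

Lemma HP_gt0 la : 0 < HP la.
Proof. by apply: prodn_gt0 => i; apply: prodn_gt0 => j; apply: hook_gt0. Qed.

Lemma hook_le la i j : all (fun p => 0 < p) la -> i < size la ->
  hook la i j <= (sumn la).+1.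
Proof.
move=> pla il; have := sumn_ge_nth pla il; have := count_size (fun p => j < p) la.
rewrite /hook /col_len; lia.
Qed.

Lemma HP_dvd la : sorted geq la -> all (fun p => 0 < p) la -> HP la %| (sumn la)`!.
Proof.
move=> sla pla; apply: dvdn_from_logn; [exact: HP_gt0 | exact: fact_gt0 |].
move=> p pp; set n := sumn la.
rewrite /HP logn_prod; last by move=> i; apply: prodn_gt0 => j; apply: hook_gt0.
rewrite (logn_fact_ext (M := n.+2)) //.
rewrite (eq_bigr (fun i : 'I_(size la) => \sum_(1 <= k < n.+2) \sum_(j < nth 0 la i) (p ^ k %| hook la i j : nat))); last first.
  move=> i _; rewrite logn_prod; last by move=> j; apply: hook_gt0.
  rewrite (eq_bigr (fun j : 'I_(nth 0 la i) => \sum_(1 <= k < n.+2) (p ^ k %| hook la i j : nat))); last first.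
    move=> j _; rewrite (logn_count_ext (M := n.+2)) // ?hook_gt0 //.
    exact: leq_trans (hook_le j pla (ltn_ord i)) (leqnSn _).
  by rewrite exchange_big.
rewrite exchange_big /=; apply: leq_sum => k _.
have pk : 0 < p ^ k by rewrite expn_gt0 prime_gt0.
rewrite leq_divRL // mulnC.
under eq_bigr => i _ do rewrite (sum_bool_count (fun j => p ^ k %| hook la i j)).
have := hooks_bound sla pla pk; by rewrite mulnC.
Qed.


Lemma logn_fact_sum p n : logn p n`! = \sum_(t <- iota 1 n) logn p t.
Proof.
elim: n => [|n IH]; first by rewrite big_nil logn1.
have -> : iota 1 n.+1 = iota 1 n ++ [:: n.+1] by rewrite -[n.+1]addn1 iotaD add1n addn1.
by rewrite factS lognM ?fact_gt0 // big_cat big_seq1 IH addnC.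
Qed.

Lemma sum_sub_strict (s r : seq nat) (f : nat -> nat) y :
  uniq s -> uniq r -> {subset s <= r} -> y \in r -> y \notin s ->
  \sum_(x <- s) f x + f y <= \sum_(x <- r) f x.
Proof.
move=> us ur sr yr ys.
rewrite [X in _ <= X](bigID (fun x => x \in s)) /=.
have -> : \sum_(i <- r | i \in s) f i = \sum_(x <- s) f x.
  rewrite -big_filter; apply: perm_big; apply: uniq_perm.
  - by rewrite filter_uniq.
  - done.
  by move=> x; rewrite mem_filter; case xs: (x \in s) => //=; rewrite sr.
rewrite leq_add2l big_mkcond (bigD1_seq y) //= (negbTE ys) /=.
exact: leq_addr.
Qed.

Lemma hook_small la n i j : sorted geq la -> all (fun p => 0 < p) la -> sumn la = n ->
  0 < j -> j < nth 0 la i -> hook la i j < n - l1 la.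
Proof.
move=> sla pla sn j0 ji.
have il : i < size la.
  by rewrite ltnNge; apply/negP => H; move: ji; rewrite nth_default.
have ic : i < col_len la j by rewrite -cellE.
have cc : col_len la j <= col_len la 1.
  by apply: sub_count => p /=; apply: leq_ltn_trans.
have h1 : 1 < nth 0 la i by lia.
have := sumn_ge_nth2 pla il h1.
have := count_1_split pla.
rewrite /hook /l1 /col_len in ic cc * => e1 e2; lia.
Qed.

Unset Implicit Arguments.
Theorem proposition7p3 (n : nat) (la : seq nat) (q : nat) :
  is_partition n la ->
  prime q ->
  n - l1 la <= q <= n ->
  ~~ (q %| flam la) ->
  forall k : nat, 1 <= k <= n %/ q -> k * q \in fch la.
Proof.
move=> [sla pla sn] pq /andP[Hlo Hhi] Hnd k /andP[k1 kn].
apply/negPn/negP => Hk; apply: (negP Hnd).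
have D := HP_dvd sla pla.
have fl : flam la = (sumn la)`! %/ HP la by [].
have Hlt : logn q (HP la) < logn q (sumn la)`!.
  have e : logn q (HP la) = \sum_(b <- fch la) logn q b.
    rewrite /HP logn_prod; last by move=> i; apply: prodn_gt0 => j; apply: hook_gt0.
    rewrite /fch big_map -(big_mkord xpredT (fun i => logn q (\prod_(j < nth 0 la i) hook la i j))) /index_iota subn0.
    apply: eq_big_seq => i; rewrite mem_iota add0n /= => il.
    rewrite logn_prod; last by move=> j; apply: hook_gt0.
    have i0 : 0 < nth 0 la i by apply: (allP pla); rewrite mem_nth.
    rewrite -(big_mkord xpredT (fun j => logn q (hook la i j))) big_ltn //.
    rewrite big1_seq ?addn0 // => j /andP[_]; rewrite mem_index_iota => /andP[j1 ji].
    have hs := hook_small sla pla sn j1 ji.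
    rewrite lognE; case: ifP => // /and3P[_ _ /dvdn_leq]; rewrite hook_gt0 => /(_ isT).
    lia.
  rewrite e sn logn_fact_sum.
  have kq : 0 < k * q by rewrite muln_gt0 k1 prime_gt0.
  have kqn : k * q <= n by rewrite -leq_divRL // prime_gt0.
  apply: leq_trans (sum_sub_strict (fun t => logn q t) _ _ _ _ Hk).
  - rewrite -[X in X < _]addn0 ltn_add2l logn_gt0 mem_primes pq kq /=.
    exact: dvdn_mull.
  - exact: uniq_fch.
  - exact: iota_uniq.
  - move=> b; rewrite fchE // => /mapP[i]; rewrite mem_iota add0n /= => il ->.
    have := sumn_ge_nth pla il; have i0 : 0 < nth 0 la i by apply: (allP pla); rewrite mem_nth.
    rewrite mem_iota /beta; lia.
  - rewrite mem_iota; lia.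
have : 0 < logn q ((sumn la)`! %/ HP la) by rewrite logn_div // subn_gt0.
by rewrite fl logn_gt0 mem_primes => /and3P[_ _ ->].
Qed.
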